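(* Let $\rho$ be an $n$-qubit density matrix and define $\vec z\in\mathbb{C}^n$ by $z_i=\langle e_i|\rho|0^n\rangle$. If $\langle0^n|\rho|0^n\rangle=2/3+c$ for some $c>0$, then every $n$-qubit pure product state $|\pi\rangle$ satisfies \[ \langle\pi|\rho|\pi\rangle\le\langle0^n|\rho|0^n\rangle+\min\Big\{3\|\vec z\|_2,\ \frac{\|\vec z\|_2^2}{c}\Big\}. \]
   Context: $|e_i\rangle$ denotes the $n$-qubit computational basis state with $|1\rangle$ in position $i$ and $|0\rangle$ elsewhere; $|0^n\rangle$ is the all-zeros basis state. *)

(* Defs.v *)
(* Complex scalars: an arbitrary numClosedFieldType C
   (e.g. the complex numbers complex R over a realType R). *)
From HB Require Import structures.
From mathcomp Require Import all_boot all_order all_algebra.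
Set Implicit Arguments. Unset Strict Implicit. Unset Printing Implicit Defensive.
Import Order.TTheory GRing.Theory Num.Theory.
Local Open Scope ring_scope.

(* Computational basis of n qubits: bit strings x : 'I_n -> bool. *)
Definition bits (n : nat) := {ffun 'I_n -> bool}.

(* An n-qubit operator, as a matrix indexed by bit strings:
   rho x y = <x| rho |y>. *)
Definition qop (C : numClosedFieldType) (n : nat) := bits n -> bits n -> C.

(* A vector of the n-qubit Hilbert space: v x = <x|v>. *)
Definition qvec (C : numClosedFieldType) (n : nat) := bits n -> C.

Definition braket (C : numClosedFieldType) n (u : qvec C n) (A : qop C n)
  (v : qvec C n) : C :=
  \sum_(x : bits n) \sum_(y : bits n) (u x)^* * A x y * v y.

Definition hermitian (C : numClosedFieldType) n (A : qop C n) : Prop :=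
  forall x y, A y x = (A x y)^*.

Definition psd (C : numClosedFieldType) n (A : qop C n) : Prop :=
  forall v : qvec C n, 0 <= braket v A v.

Definition trace (C : numClosedFieldType) n (A : qop C n) : C :=
  \sum_(x : bits n) A x x.

Definition density_matrix (C : numClosedFieldType) n (A : qop C n) : Prop :=
  [/\ hermitian A, psd A & trace A = 1].

(* |0^n> and |e_i> as bit strings *)
Definition zeros n : bits n := [ffun _ => false].
Definition e_ n (i : 'I_n) : bits n := [ffun j => j == i].

(* single-qubit unit vector a : bool -> C (a false = <0|a>, a true = <1|a>) *)
Definition unit_qubit (C : numClosedFieldType) (a : bool -> C) : Prop :=
  `|a false| ^+ 2 + `|a true| ^+ 2 = 1.

Definition product_state (C : numClosedFieldType) n (a : 'I_n -> bool -> C)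
  : qvec C n := fun x => \prod_(i < n) a i (x i).

Definition norm2 (C : numClosedFieldType) n (z : 'I_n -> C) : C :=
  sqrtC (\sum_(i < n) `|z i| ^+ 2).

(* Main.v *)
Require Import Defs.
From HB Require Import structures.
From mathcomp Require Import all_boot all_order all_algebra.
From mathcomp Require Import ring lra.
Set Implicit Arguments. Unset Strict Implicit. Unset Printing Implicit Defensive.
Import Order.TTheory GRing.Theory Num.Theory.
Local Open Scope ring_scope.

Lemma core_step1 (R : realFieldType) (c f a b r t x Z k : R) :
 0 < c -> 0 <= a -> 0 <= b -> 0 <= r -> 0 <= t -> 0 <= x -> 0 <= Z -> 0 <= k ->
 a ^+ 2 + t ^+ 2 = 1 -> b ^+ 2 + r ^+ 2 = t ^+ 2 ->
 x <= Z * b + k * r ->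
 f * (2/3 + c) <= a ^+ 2 * (2/3+c) ^+ 2 + 2 * a*(2/3+c) * x + x ^+ 2 + t ^+ 2*((2/3+c)*(1-(2/3+c))) - t ^+ 2*(Z ^+ 2+k ^+ 2) ->
 f * (2/3 + c) - (2/3+c) ^+ 2 <= 2 * a*(2/3+c)*(Z * b+k * r) - (Z * r-k * b) ^+ 2 - t ^+ 2*(2/3+c)*(2*(2/3+c)-1).
Proof.
move=> c0 a0 b0 r0 t0 x0 Z0 k0 e1 e2 hx hf.
set p := 2/3 + c in hf *.
have p0 : 0 < p by rewrite /p; lra.
have hy : 2 * a * p * x + x ^+ 2 <= 2 * a * p * (Z * b+k * r) + (Z * b+k * r) ^+ 2.
  have h1 : 2 * a * p * x <= 2 * a * p * (Z * b+k * r) by apply: ler_wpM2l => //; nra.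
  have h2 : x ^+ 2 <= (Z * b+k * r) ^+ 2 by nra.
  lra.
have ea : a ^+ 2 = 1 - t ^+ 2 by lra.
rewrite ea in hf.
have e3 : (Z * b+k * r) ^+ 2 - t ^+ 2*(Z ^+ 2+k ^+ 2) = -(Z * r-k * b) ^+ 2.
  rewrite -e2; ring.
lra.
Qed.

Lemma core_step2 (R : realFieldType) (c f a b r t Z k : R) :
 0 < c -> 0 <= a -> 0 <= b -> 0 <= r -> 0 <= t -> 0 <= Z -> 0 <= k ->
 b ^+ 2 + r ^+ 2 = t ^+ 2 ->
 2 * a ^+ 2 * r ^+ 2 <= t ^+ 2 * b ^+ 2 -> a ^+ 2 * t ^+ 2 <= b ^+ 2 ->
 f * (2/3 + c) - (2/3+c) ^+ 2 <= 2 * a*(2/3+c)*(Z * b+k * r) - (Z * r-k * b) ^+ 2 - t ^+ 2*(2/3+c)*(2*(2/3+c)-1) ->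
 f - (2/3+c) <= 2 * Z * t - 3/2 * c * t ^+ 2.
Proof.
move=> c0 a0 b0 r0 t0 Z0 k0 e2 h1 h2 hG.
set p := 2/3 + c in hG *.
have p0 : 0 < p by rewrite /p; lra.
have hG' : (f - p) * p <= 2 * a * p * (Z * b+k * r) - (Z * r-k * b) ^+ 2 - t ^+ 2 * p * (2 * p-1).
  by rewrite mulrBl -expr2.
have [b_eq0|bpos] := eqVneq b 0.
  have hat : a * t = 0.
    apply/eqP; rewrite -sqrf_eq0 exprMn; apply/eqP.
    apply: le_anti; apply/andP; split; last by nra.
    by move: h2; rewrite b_eq0 expr0n /=.
  have hakr : a * k * r = 0.
    have [a0'|an0] := eqVneq a 0; first by rewrite a0' !mul0r.
    have t_eq0 : t = 0 by move/eqP: hat; rewrite mulf_eq0 (negPf an0) => /eqP.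
    have : r ^+ 2 = 0 by move: e2; rewrite t_eq0 b_eq0 expr0n /= add0r.
    by move/eqP; rewrite sqrf_eq0 => /eqP ->; rewrite mulr0.
  have : (f - p) * p <= - (t ^+ 2 * p * (2 * p - 1)).
    apply: (le_trans hG'). rewrite b_eq0.
    have -> : 2 * a * p * (Z * 0 + k * r) = 2 * p * (a * k * r) by ring.
    rewrite hakr mulr0 add0r.
    nra.
  move=> h; have : f - p <= - (t ^+ 2 * (2 * p - 1)).
    rewrite -(ler_pM2r p0) mulNr -mulrA (mulrC (2 * p - 1)) mulrA. done.
  have : 0 <= Z * t by nra.
  have : 0 <= t ^+ 2 by nra.
  rewrite /p; nra.
have b0' : 0 < b by rewrite lt_neqAle eq_sym bpos b0.
set m := k * b - Z * r.
have hkb : k * b = m + Z * r by rewrite /m; ring.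
have s1 : b ^+ 2 * ((f - p) * p) <= 2 * a * p * Z * b * t ^+ 2 + a ^+ 2 * p ^+ 2 * r ^+ 2 - t ^+ 2 * p * (2 * p-1) * b ^+ 2.
  have q1 : b ^+ 2 * ((f - p) * p) <= b ^+ 2 * (2 * a * p * (Z * b+k * r) - (Z * r-k * b) ^+ 2 - t ^+ 2 * p * (2 * p-1)).
    by apply: ler_wpM2l => //; nra.
  apply: (le_trans q1).
  have e4 : b ^+ 2 * (2 * a * p * (Z * b+k * r) - (Z * r-k * b) ^+ 2 - t ^+ 2 * p * (2 * p-1)) =
      2 * a * p * Z * b*(b ^+ 2 + r ^+ 2) + 2*(a * p * r)*(b * m) - (b * m) ^+ 2 - t ^+ 2 * p * (2 * p-1) * b ^+ 2.
    rewrite /m; ring.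
  rewrite e4 e2.
  have : 2*(a * p * r)*(b * m) - (b * m) ^+ 2 <= (a * p * r) ^+ 2.
    have := sqr_ge0 (a * p * r - b * m).
    have -> : (a * p * r - b * m) ^+ 2 = (a * p * r) ^+ 2 - 2*(a * p * r)*(b * m) + (b * m) ^+ 2 by ring.
    lra.
  rewrite !exprMn. lra.
have s2 : a ^+ 2 * p ^+ 2 * r ^+ 2 <= p ^+ 2 * t ^+ 2 * b ^+ 2 / 2.
  have : 0 <= p ^+ 2 by nra.
  nra.
have at_le : a * t <= b.
  have : (a * t) ^+ 2 <= b ^+ 2 by rewrite exprMn.
  by rewrite ler_pXn2r // ?nnegrE; nra.
have s3 : 2 * a * p * Z * b * t ^+ 2 <= 2 * p * Z * b ^+ 2 * t.
  have h0 : 0 <= 2 * p * Z * b * t.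
    by rewrite !mulr_ge0 //; lra.
  have := ler_wpM2l h0 at_le.
  have -> : 2 * a * p * Z * b * t ^+ 2 = 2 * p * Z * b * t * (a * t) by ring.
  have -> : 2 * p * Z * b ^+ 2 * t = 2 * p * Z * b * t * b by ring.
  done.
have s4 : b ^+ 2 * ((f - p) * p) <= b ^+ 2 * (p * (2 * Z * t - 3/2 * c * t ^+ 2)).
  rewrite /p in s1 s2 s3 *. nra.
have s5 : (f - p) * p <= p * (2 * Z * t - 3/2 * c * t ^+ 2).
  by rewrite -(ler_pM2l (_ : 0 < b ^+ 2)) //; nra.
nra.
Qed.

Lemma core_step3 (R : realFieldType) (c f t Z p : R) :
 0 < c -> 0 <= t -> t <= 1 -> 0 <= Z ->
 f - p <= 2 * Z * t - 3/2 * c * t ^+ 2 ->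
 f <= p + 3 * Z /\ f <= p + Z ^+ 2 / c.
Proof.
move=> c0 t0 t1 Z0 h; split.
  have : Z * t <= Z by rewrite -{2}(mulr1 Z); apply: ler_wpM2l.
  have : 0 <= c * t ^+ 2 by nra.
  lra.
have h2 : 2 * Z * t * c <= Z ^+ 2 + c ^+ 2 * t ^+ 2.
  have := sqr_ge0 (Z - c * t).
  have -> : (Z - c * t) ^+ 2 = Z ^+ 2 - 2 * Z * t * c + c ^+ 2 * t ^+ 2 by ring.
  lra.
have h3 : 2 * Z * t <= Z ^+ 2 / c + c * t ^+ 2.
  rewrite -(ler_pM2r c0).
  have -> : (Z ^+ 2 / c + c * t ^+ 2) * c = Z ^+ 2 + c ^+ 2 * t ^+ 2.
    by field; rewrite gt_eqF.
  done.
have : 0 <= c * t ^+ 2 by nra.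
lra.
Qed.

Lemma core_all (R : realFieldType) (c f a b r t x Z k : R) :
 0 < c -> 0 <= a -> 0 <= b -> 0 <= r -> 0 <= t -> 0 <= x -> 0 <= Z -> 0 <= k ->
 a ^+ 2 + t ^+ 2 = 1 -> b ^+ 2 + r ^+ 2 = t ^+ 2 ->
 2 * a ^+ 2 * r ^+ 2 <= t ^+ 2 * b ^+ 2 -> a ^+ 2 * t ^+ 2 <= b ^+ 2 ->
 x <= Z * b + k * r ->
 f <= a ^+ 2 * (2/3 + c) + 2 * a * x + x ^+ 2 / (2/3 + c)
      + t ^+ 2 * (1 - (2/3 + c) - (Z ^+ 2 + k ^+ 2) / (2/3 + c)) ->
 f <= (2/3 + c) + 3 * Z /\ f <= (2/3 + c) + Z ^+ 2 / c.
Proof.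
move=> c0 a0 b0 r0 t0 x0 Z0 k0 e1 e2 h1 h2 hx hf.
have p0 : 0 < 2/3 + c by lra.
have hf' : f * (2/3 + c) <= a ^+ 2 * (2/3 + c) ^+ 2 + 2 * a * (2/3 + c) * x + x ^+ 2
     + t ^+ 2 * ((2/3 + c) * (1 - (2/3 + c))) - t ^+ 2 * (Z ^+ 2 + k ^+ 2).
  have := ler_wpM2r (ltW p0) hf.
  have -> : (a ^+ 2 * (2/3 + c) + 2 * a * x + x ^+ 2 / (2/3 + c)
      + t ^+ 2 * (1 - (2/3 + c) - (Z ^+ 2 + k ^+ 2) / (2/3 + c))) * (2/3 + c)
      = a ^+ 2 * (2/3 + c) ^+ 2 + 2 * a * (2/3 + c) * x + x ^+ 2
     + t ^+ 2 * ((2/3 + c) * (1 - (2/3 + c))) - t ^+ 2 * (Z ^+ 2 + k ^+ 2).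
    by field; rewrite gt_eqF //; lra.
  done.
have s1 := core_step1 c0 a0 b0 r0 t0 x0 Z0 k0 e1 e2 hx hf'.
have s2 := core_step2 c0 a0 b0 r0 t0 Z0 k0 e2 h1 h2 s1.
have t1 : t <= 1.
  have : t ^+ 2 <= 1 by nra.
  by move=> h; nra.
exact: core_step3 c0 t0 t1 Z0 s2.
Qed.


Lemma prod_step (R : realFieldType) (A B u : R) :
  0 <= A -> 0 <= B -> A + B <= 1 -> 0 <= u -> u <= 1 ->
  A * (1 - A) <= B -> 2 * A * (1 - A - B) <= (1 - A) * B ->
  let A' := A * u in let B' := u * B + (1 - u) * A in
  [/\ 0 <= A', 0 <= B', A' + B' <= 1, A' * (1 - A') <= B' &
      2 * A' * (1 - A' - B') <= (1 - A') * B'].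
Proof.
move=> A0 B0 AB u0 u1 q2 q1 A' B'; rewrite /A' /B'; split.
- nra.
- nra.
- nra.
- have h1 : u * (A * (1 - A)) <= u * B by apply: ler_wpM2l.
  have h2 : 0 <= (1 - u) * A * (1 - u * A).
    apply: mulr_ge0; first by apply: mulr_ge0 => //; lra. nra.
  have e : u * B + (1 - u) * A - A * u * (1 - A * u) = (u * B - u * (A * (1 - A))) + (1 - u) * A * (1 - u * A) by ring.
  rewrite -subr_ge0 e; lra.
- have h1 : 2 * A * u * (1 - A - B) <= u * ((1 - A) * B) by nra.
  have h2 : 0 <= A * ((1 - u) * (1 - u * (A + B))).
    apply: mulr_ge0 => //; apply: mulr_ge0; first lra. nra.
  have e : (1 - A * u) * (u * B + (1 - u) * A) - 2 * (A * u) * (1 - A * u - (u * B + (1 - u) * A))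
     = (u * ((1 - A) * B) - 2 * A * u * (1 - A - B)) + A * ((1 - u) * (1 - u * (A + B))) by ring.
  rewrite -subr_ge0 e; lra.
Qed.

Lemma prod_facts (R : realFieldType) n (u : 'I_n -> R) :
  (forall i, 0 <= u i <= 1) ->
  let A := \prod_(i < n) u i in
  let B := \sum_(i < n) (1 - u i) * \prod_(j < n) (if j == i then 1 else u j) in
  [/\ 0 <= A, 0 <= B, A + B <= 1, A * (1 - A) <= B &
      2 * A * (1 - A - B) <= (1 - A) * B].
Proof.
elim: n u => [|n IH] u hu A B.
  rewrite /A /B big_ord0 big_ord0; split; lra.
pose u' := fun j : 'I_n => u (widen_ord (leqnSn n) j).
have hu' : forall i, 0 <= u' i <= 1 by move=> i; exact: hu.
have [A0 B0 AB q2 q1] := IH u' hu'.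
have eA : A = (\prod_(i < n) u' i) * u ord_max by rewrite /A big_ord_recr.
have eB : B = u ord_max * (\sum_(i < n) (1 - u' i) * \prod_(j < n) (if j == i then 1 else u' j))
            + (1 - u ord_max) * \prod_(i < n) u' i.
  rewrite /B big_ord_recr /= mulr_sumr; congr (_ + _).
    apply: eq_bigr => i _; rewrite big_ord_recr /=.
    have -> : (ord_max == widen_ord (leqnSn n) i) = false.
      by apply/negbTE; rewrite neq_ltn /= ltn_ord orbT.
    rewrite (eq_bigr (fun j : 'I_n => if j == i then 1 else u' j)); last first.
      by move=> j _; rewrite /u'.
    rewrite /u'; ring.
  rewrite big_ord_recr /= eqxx mulr1; congr (_ * _).
  apply: eq_bigr => j _.
  have -> : (widen_ord (leqnSn n) j == ord_max) = false.
    by apply/negbTE; rewrite neq_ltn /= ltn_ord.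
  done.
have [u0 u1] := andP (hu ord_max).
have := prod_step A0 B0 AB u0 u1 q2 q1.
by rewrite /= -eA -eB.
Qed.

Section RealSub.
Variable C : numClosedFieldType.
Record Rr := in_Rr {Rrval :> C; RrvalP : Rrval \is Num.real}.

HB.instance Definition _ := [isSub for Rrval].
HB.instance Definition _ := [Choice of Rr by <:].
HB.instance Definition _ := [SubChoice_isSubIntegralDomain of Rr by <:].
HB.instance Definition _ := [SubIntegralDomain_isSubField of Rr by <:].
HB.instance Definition _ : Order.isPOrder ring_display Rr :=
  Order.CancelPartial.Pcan _ valK.
Lemma total_Rr : total (<=%O : rel (Rr : porderType _)).
Proof. by move=> x y; apply/real_leVge/valP/valP. Qed.
HB.instance Definition _ := Order.POrder_isTotal.Build _ Rr total_Rr.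

Lemma Rrval_is_zmod_morphism : zmod_morphism Rrval. Proof. by []. Qed.
Lemma Rrval_is_monoid_morphism : monoid_morphism Rrval. Proof. by []. Qed.
HB.instance Definition _ := GRing.isZmodMorphism.Build Rr C Rrval
  Rrval_is_zmod_morphism.
HB.instance Definition _ := GRing.isMonoidMorphism.Build Rr C Rrval
  Rrval_is_monoid_morphism.

Definition Rr_norm (x : Rr) : Rr := in_Rr (normr_real (val x)).
Lemma Rr_ler_normD x y : Rr_norm (x + y) <= (Rr_norm x + Rr_norm y).
Proof. exact: ler_normD. Qed.
Lemma Rr_normr0_eq0 x : Rr_norm x = 0 -> x = 0.
Proof. by move=> /(congr1 val)/normr0_eq0 ?; apply/val_inj. Qed.
Lemma Rr_normrMn x n : Rr_norm (x *+ n) = Rr_norm x *+ n.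
Proof. by apply/val_inj; rewrite /= !rmorphMn/= normrMn. Qed.
Lemma Rr_normrN x : Rr_norm (- x) = Rr_norm x.
Proof. by apply/val_inj; apply: normrN. Qed.

Section withz.
Let z : Rr := 0.
Lemma Rr_addr_gt0 (x y : Rr) : z < x -> z < y -> z < x + y.
Proof. exact: addr_gt0. Qed.
Lemma Rr_ger_leVge (x y : Rr) : z <= x -> z <= y -> (x <= y) || (y <= x).
Proof. exact: ger_leVge. Qed.
Lemma Rr_normrM : {morph Rr_norm : x y / x * y}.
Proof. by move=> *; apply/val_inj; apply: normrM. Qed.
Lemma Rr_ler_def (x y : Rr) : (x <= y) = (Rr_norm (y - x) == y - x).
Proof. by apply: ler_def. Qed.
End withz.

HB.instance Definition _ := Num.Zmodule_isNormed.Build _ Rr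
  Rr_ler_normD Rr_normr0_eq0 Rr_normrMn Rr_normrN.
HB.instance Definition _ := Num.isNumRing.Build Rr
  Rr_addr_gt0 Rr_ger_leVge Rr_normrM Rr_ler_def.

Lemma Rr_leE (x y : Rr) : (x <= y) = (val x <= val y).
Proof. by []. Qed.
Lemma Rr_ltE (x y : Rr) : (x < y) = (val x < val y).
Proof. by []. Qed.
End RealSub.



Section Lin.
Variable C : numClosedFieldType.

Lemma sum_deltaR (T : finType) (y : T) (F : T -> C) :
  \sum_(z : T) F z * (z == y)%:R = F y.
Proof.
rewrite (bigD1 y) //= eqxx mulr1 big1 ?addr0 // => z /negbTE ->; by rewrite mulr0.
Qed.

Lemma sum_deltaL (T : finType) (y : T) (F : T -> C) :
  \sum_(z : T) (z == y)%:R * F z = F y.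
Proof. by rewrite -(sum_deltaR y F); apply: eq_bigr => z _; rewrite mulrC. Qed.

Lemma sum_prod (T : finType) (F G : T -> C) :
  \sum_i \sum_j F i * G j = (\sum_i F i) * (\sum_j G j).
Proof. by rewrite mulr_suml; apply: eq_bigr => i _; rewrite mulr_sumr. Qed.

Lemma sum4 (T : finType) (P Q R U : T -> T -> C) :
  \sum_i \sum_j (P i j + Q i j - R i j - U i j) =
  \sum_i \sum_j P i j + \sum_i \sum_j Q i j - \sum_i \sum_j R i j - \sum_i \sum_j U i j.
Proof.
under eq_bigr => i _ do rewrite !(sumrB, big_split).
by rewrite !(sumrB, big_split).
Qed.

Lemma CS_sq (T : finType) (c d : T -> C) :
  `|\sum_i c i * d i| ^+ 2 <= (\sum_i `|c i| ^+ 2) * (\sum_i `|d i| ^+ 2).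
Proof.
have E : forall i j, `|c i * (d j)^* - c j * (d i)^*| ^+ 2
     = (c i * (c i)^*) * (d j * (d j)^*) + (c j * (c j)^*) * (d i * (d i)^*)
       - (c i * d i) * (c j * d j)^* - (c j * d j) * (c i * d i)^*.
  move=> i j; rewrite normCK rmorphB !rmorphM /= !conjCK; ring.
have S0 : 0 <= \sum_i \sum_j ((c i * (c i)^*) * (d j * (d j)^*) + (c j * (c j)^*) * (d i * (d i)^*)
       - (c i * d i) * (c j * d j)^* - (c j * d j) * (c i * d i)^*).
  by apply: sumr_ge0 => i _; apply: sumr_ge0 => j _; rewrite -E; apply: exprn_ge0.
set X1 := \sum_i c i * (c i)^*.
set X2 := \sum_i d i * (d i)^*.
set Y := \sum_i c i * d i.
have eP : \sum_i \sum_j c i * (c i)^* * (d j * (d j)^*) = X1 * X2 by rewrite sum_prod.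
have eQ : \sum_i \sum_j c j * (c j)^* * (d i * (d i)^*) = X1 * X2.
  by rewrite exchange_big sum_prod.
have eR : \sum_i \sum_j c i * d i * (c j * d j)^* = Y * Y^* by rewrite sum_prod rmorph_sum.
have eU : \sum_i \sum_j c j * d j * (c i * d i)^* = Y * Y^*.
  by rewrite exchange_big sum_prod rmorph_sum.
rewrite sum4 eP eQ eR eU in S0.
rewrite normCK.
rewrite (eq_bigr (fun i => c i * (c i)^*)); last by move=> i _; rewrite normCK.
rewrite [X in _ <= _ * X](eq_bigr (fun i => d i * (d i)^*)); last by move=> i _; rewrite normCK.
rewrite -/X1 -/X2 -/Y.
rewrite -subr_ge0.
have -> : X1 * X2 - Y * Y^* = (X1 * X2 + X1 * X2 - Y * Y^* - Y * Y^*) / 2.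
  by field.
by apply: divr_ge0.
Qed.

Lemma CS (T : finType) (P : pred T) (c d : T -> C) :
  `|\sum_(i | P i) c i * d i| <= sqrtC (\sum_(i | P i) `|c i| ^+ 2) * sqrtC (\sum_(i | P i) `|d i| ^+ 2).
Proof.
have e1 : \sum_i (if P i then c i else 0) * (if P i then d i else 0) = \sum_(i | P i) c i * d i.
  by rewrite [RHS]big_mkcond; apply: eq_bigr => i _; case: (P i); rewrite ?mulr0.
have e2 : forall f : T -> C, \sum_i `|if P i then f i else 0| ^+ 2 = \sum_(i | P i) `|f i| ^+ 2.
  by move=> f; rewrite [RHS]big_mkcond; apply: eq_bigr => i _; case: (P i); rewrite ?normr0 ?expr0n.
have := CS_sq (fun i => if P i then c i else 0) (fun i => if P i then d i else 0).
rewrite /= e1 !e2 => h.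
have h1 : 0 <= \sum_(i | P i) `|c i| ^+ 2 by apply: sumr_ge0 => i _; apply: exprn_ge0.
have h2 : 0 <= \sum_(i | P i) `|d i| ^+ 2 by apply: sumr_ge0 => i _; apply: exprn_ge0.
rewrite -sqrtCM ?nnegrE //.
rewrite -(ler_sqrtC (x := `|_| ^+ 2)) ?nnegrE ?exprn_ge0 ?mulr_ge0 // in h.
by rewrite (_ : sqrtC (`|_| ^+ 2) = `| \sum_(i | P i) c i * d i|) in h; last by rewrite sqrCK.
Qed.

Lemma sum_addR (T : finType) (F G : T -> C) (y0 : T) (l : C) :
  \sum_y F y * (G y + (y == y0)%:R * l) = \sum_y F y * G y + F y0 * l.
Proof.
under eq_bigr => y _ do rewrite mulrDr.
rewrite big_split /=; congr (_ + _).
rewrite -(sum_deltaR y0 (fun y => F y * l)); apply: eq_bigr => y _; ring.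
Qed.

Lemma sum_addL (T : finType) (G H : T -> C) (x0 : T) (l : C) :
  \sum_x (G x + (x == x0)%:R * l)^* * H x = \sum_x (G x)^* * H x + l^* * H x0.
Proof.
under eq_bigr => x _ do rewrite rmorphD rmorphM /= conjC_nat mulrDl.
rewrite big_split /=; congr (_ + _).
rewrite -(sum_deltaR x0 (fun x => l^* * H x)); apply: eq_bigr => y _; ring.
Qed.

Section Braket.
Variable n : nat.

Lemma braketE (u : qvec C n) (A : qop C n) (v : qvec C n) :
  braket u A v = \sum_x (u x)^* * (\sum_y A x y * v y).
Proof. by apply: eq_bigr => x _; rewrite mulr_sumr; apply: eq_bigr => y _; rewrite mulrA. Qed.

Lemma braket_expand (rho : qop C n) (u : qvec C n) (x0 : bits n) (l : C) :
  let u' := fun x => u x + (x == x0)%:R * l in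
  braket u' rho u' = braket u rho u + l^* * (\sum_y rho x0 y * u y)
     + l * (\sum_x (u x)^* * rho x x0) + l^* * l * rho x0 x0.
Proof.
move=> u'; rewrite !braketE /u'.
under eq_bigr => x _ do rewrite sum_addR.
rewrite sum_addL.
under eq_bigr => x _ do rewrite mulrDr.
rewrite big_split /=.
have -> : \sum_i (u i)^* * (rho i x0 * l) = l * \sum_i (u i)^* * rho i x0.
  by rewrite mulr_sumr; apply: eq_bigr => i _; ring.
ring.
Qed.

Lemma braket_two (S : qop C n) (x y : bits n) (a b : C) :
  braket (fun z => (0 + (z == y)%:R * a) + (z == x)%:R * b) S
         (fun z => (0 + (z == y)%:R * a) + (z == x)%:R * b)
  = a^* * a * S y y + b^* * (S x y * a) + b * (a^* * S y x) + b^* * b * S x x.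
Proof.
rewrite (braket_expand S (fun z => 0 + (z == y)%:R * a) x b) /=.
rewrite (braket_expand S (fun z => 0) y a) /=.
rewrite sum_addR sum_addL.
have -> : braket (fun _ : bits n => 0) S (fun _ => 0) = 0.
  by rewrite /braket big1 // => i _; rewrite big1 // => j _; rewrite mulr0.
have -> : \sum_i S y i * 0 = 0 by rewrite big1 // => i _; rewrite mulr0.
have -> : \sum_i S x i * 0 = 0 by rewrite big1 // => i _; rewrite mulr0.
have -> : \sum_i (0 : C)^* * S i y = 0 by rewrite big1 // => i _; rewrite rmorph0 mul0r.
have -> : \sum_i (0 : C)^* * S i x = 0 by rewrite big1 // => i _; rewrite rmorph0 mul0r.
ring.
Qed.

Lemma trace_bound (S : qop C n) (w : qvec C n) :
  psd S -> braket w S w <= (\sum_x `|w x| ^+ 2) * trace S.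
Proof.
move=> hS.
have H0 : 0 <= \sum_x \sum_y ((w x * (w x)^*) * S y y + (w y * (w y)^*) * S x x
                - w y * (S x y * (w x)^*) - (w y)^* * (w x * S y x)).
  apply: sumr_ge0 => x _; apply: sumr_ge0 => y _.
  have := hS (fun z => (0 + (z == y)%:R * (w x)^*) + (z == x)%:R * (- (w y)^*)).
  rewrite braket_two !rmorphN /= !conjCK => h.
  apply: (le_trans h); rewrite le_eqVlt; apply/orP; left; apply/eqP; ring.
rewrite sum4 in H0.
set N := \sum_x w x * (w x)^*.
have e1 : \sum_x \sum_y w x * (w x)^* * S y y = N * trace S by rewrite sum_prod.
have e2 : \sum_x \sum_y w y * (w y)^* * S x x = N * trace S.
  by rewrite exchange_big sum_prod.
have e3 : \sum_x \sum_y w y * (S x y * (w x)^*) = braket w S w.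
  by apply: eq_bigr => x _; apply: eq_bigr => y _; ring.
have e4 : \sum_x \sum_y (w y)^* * (w x * S y x) = braket w S w.
  by rewrite exchange_big; apply: eq_bigr => x _; apply: eq_bigr => y _; ring.
rewrite e1 e2 e3 e4 in H0.
have -> : \sum_x `|w x| ^+ 2 = N by apply: eq_bigr => x _; rewrite normCK.
rewrite -subr_ge0.
have -> : N * trace S - braket w S w = (N * trace S + N * trace S - braket w S w - braket w S w) / 2.
  by field.
by apply: divr_ge0.
Qed.

Lemma herm_sum (rho : qop C n) (u : qvec C n) (x0 : bits n) :
  Defs.hermitian rho -> \sum_x (u x)^* * rho x x0 = (\sum_y rho x0 y * u y)^*.
Proof.
move=> hr; rewrite rmorph_sum; apply: eq_bigr => x _.
by rewrite rmorphM /= (hr x0 x) mulrC.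
Qed.

Definition schur (rho : qop C n) (x0 : bits n) : qop C n :=
  fun x y => rho x y - rho x x0 * rho x0 y / rho x0 x0.

Lemma schur_braket (rho : qop C n) (x0 : bits n) (u : qvec C n) :
  braket u (schur rho x0) u = braket u rho u
    - (\sum_x (u x)^* * rho x x0) * (\sum_y rho x0 y * u y) / rho x0 x0.
Proof.
rewrite /braket /schur -sum_prod mulr_suml -sumrB; apply: eq_bigr => x _.
rewrite mulr_suml -sumrB; apply: eq_bigr => y _; ring.
Qed.

Lemma schur_psd (rho : qop C n) (x0 : bits n) :
  Defs.hermitian rho -> psd rho -> 0 < rho x0 x0 -> psd (schur rho x0).
Proof.
move=> hr hp p0 u; rewrite schur_braket herm_sum //.
set p := rho x0 x0 in p0 *; set Y := \sum_y rho x0 y * u y.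
have := hp (fun x => u x + (x == x0)%:R * (- (Y / p))).
rewrite braket_expand herm_sum // -/p -/Y.
have pc : p^* = p by apply: geC0_conj; apply: ltW.
have pn : p != 0 by rewrite gt_eqF.
rewrite !rmorphN !rmorphM /= fmorphV /= pc.
move=> h; apply: (le_trans h); rewrite le_eqVlt; apply/orP; left; apply/eqP.
by field.
Qed.

Lemma schur_trace (rho : qop C n) (x0 : bits n) :
  Defs.hermitian rho ->
  trace (schur rho x0) = trace rho - (\sum_x `|rho x x0| ^+ 2) / rho x0 x0.
Proof.
move=> hr; rewrite /trace /schur mulr_suml -sumrB; apply: eq_bigr => x _.
by rewrite normCK -(hr x x0).
Qed.

Lemma schur_bound (rho : qop C n) (x0 : bits n) (w : qvec C n) :
  Defs.hermitian rho -> psd rho -> 0 < rho x0 x0 ->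
  braket w rho w - (\sum_y rho x0 y * w y)^* * (\sum_y rho x0 y * w y) / rho x0 x0
  <= (\sum_x `|w x| ^+ 2) * (trace rho - (\sum_x `|rho x x0| ^+ 2) / rho x0 x0).
Proof.
move=> hr hp p0.
rewrite -schur_trace // -(herm_sum w x0 hr) -schur_braket.
exact: trace_bound (schur_psd hr hp p0).
Qed.

End Braket.

End Lin.


Section PS.
Variable C : numClosedFieldType.
Variable n : nat.
Variable a : 'I_n -> bool -> C.

Lemma pi_norm2 (x : bits n) :
  `|product_state a x| ^+ 2 = \prod_i `|a i (x i)| ^+ 2.
Proof. by rewrite /product_state normr_prod prodrXl. Qed.

Lemma pi_total : (forall i, unit_qubit (a i)) ->
  \sum_x `|product_state a x| ^+ 2 = 1.
Proof.
move=> hu.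
under eq_bigr => x _ do rewrite pi_norm2.
rewrite -(bigA_distr_bigA (fun i b => `|a i b| ^+ 2)) /=.
rewrite big1 // => i _; rewrite big_bool /= addrC; exact: hu.
Qed.

Lemma pi_zero : `|product_state a (zeros n)| ^+ 2 = \prod_i `|a i false| ^+ 2.
Proof. by rewrite pi_norm2; apply: eq_bigr => i _; rewrite ffunE. Qed.

Lemma pi_e (i : 'I_n) : unit_qubit (a i) ->
  `|product_state a (e_ i)| ^+ 2 =
  (1 - `|a i false| ^+ 2) * \prod_j (if j == i then 1 else `|a j false| ^+ 2).
Proof.
move=> hu; rewrite pi_norm2 (bigD1 i) //= [in RHS](bigD1 i) //= ffunE !eqxx mul1r.
congr (_ * _); first by rewrite -hu addrC addKr.
apply: eq_bigr => j /negbTE hj; by rewrite ffunE hj.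
Qed.

End PS.

Section E1.
Variable C : numClosedFieldType.
Variable n : nat.

Definition E1 : {set bits n} := [set e_ i | i : 'I_n].

Lemma e_inj : injective (@e_ n).
Proof.
move=> i j /(congr1 (fun f : bits n => f i)); rewrite !ffunE eqxx.
by move/esym/eqP.
Qed.

Lemma zeros_notin_E1 : zeros n \notin E1.
Proof.
apply/imsetP => -[i _] /(congr1 (fun f : bits n => f i)).
by rewrite !ffunE eqxx.
Qed.

Lemma sum_E1 (F : bits n -> C) : \sum_(x in E1) F x = \sum_i F (e_ i).
Proof. by rewrite big_imset //= => i j _ _; apply: e_inj. Qed.

Lemma sum_split_nz (F : bits n -> C) :
  \sum_(x | x != zeros n) F x =
  \sum_(x in E1) F x + \sum_(x | (x != zeros n) && (x \notin E1)) F x.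
Proof.
rewrite (bigID (fun x => x \in E1)) /=; congr (_ + _).
apply: eq_bigl => x; case: (boolP (x \in E1)) => hx; rewrite ?andbT ?andbF //.
by apply/eqP => ex; move: hx; rewrite ex (negbTE zeros_notin_E1).
Qed.

Lemma sum_split3 (F : bits n -> C) :
  \sum_x F x = F (zeros n) + \sum_(x in E1) F x
     + \sum_(x | (x != zeros n) && (x \notin E1)) F x.
Proof. by rewrite (bigD1 (zeros n)) //= sum_split_nz addrA. Qed.

End E1.


Lemma core_C (C : numClosedFieldType) (c f a b r t x Z k : C) :
 0 < c -> f \is Num.real -> 0 <= a -> 0 <= b -> 0 <= r -> 0 <= t -> 0 <= x -> 0 <= Z -> 0 <= k ->
 a ^+ 2 + t ^+ 2 = 1 -> b ^+ 2 + r ^+ 2 = t ^+ 2 ->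
 2 * a ^+ 2 * r ^+ 2 <= t ^+ 2 * b ^+ 2 -> a ^+ 2 * t ^+ 2 <= b ^+ 2 ->
 x <= Z * b + k * r ->
 f <= a ^+ 2 * (2/3 + c) + 2 * a * x + x ^+ 2 / (2/3 + c)
      + t ^+ 2 * (1 - (2/3 + c) - (Z ^+ 2 + k ^+ 2) / (2/3 + c)) ->
 f <= (2/3 + c) + 3 * Z /\ f <= (2/3 + c) + Z ^+ 2 / c.
Proof.
move=> c0 fr a0 b0 r0 t0 x0 Z0 k0 e1 e2 h1 h2 hx hf.
pose cR := @in_Rr C c (gtr0_real c0).
pose fR := @in_Rr C f fr.
pose aR := @in_Rr C a (ger0_real a0).
pose bR := @in_Rr C b (ger0_real b0).
pose rR := @in_Rr C r (ger0_real r0).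
pose tR := @in_Rr C t (ger0_real t0).
pose xR := @in_Rr C x (ger0_real x0).
pose ZR := @in_Rr C Z (ger0_real Z0).
pose kR := @in_Rr C k (ger0_real k0).
have E1 : aR ^+ 2 + tR ^+ 2 = 1 by apply: val_inj; exact e1.
have E2 : bR ^+ 2 + rR ^+ 2 = tR ^+ 2 by apply: val_inj; exact e2.
have [H1 H2] := @core_all (Rr C) cR fR aR bR rR tR xR ZR kR c0 a0 b0 r0 t0 x0 Z0 k0 E1 E2 h1 h2 hx hf.
by split.
Qed.


Lemma braket_ext (C : numClosedFieldType) n (u u' : qvec C n) (A : qop C n) (v v' : qvec C n) :
  (forall x, u x = u' x) -> (forall x, v x = v' x) -> braket u A v = braket u' A v'.
Proof.
by move=> hu hv; apply: eq_bigr => x _; apply: eq_bigr => y _; rewrite hu hv.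
Qed.

Lemma ReP_le (C : numClosedFieldType) (q : C) : q + q^* <= 2 * `|q|.
Proof.
have h1 : q + q^* = 2 * 'Re q by rewrite ReE; field.
rewrite h1 ler_pM2l ?ltr0n //.
apply: le_trans (real_ler_norm (Creal_Re q)) _.
exact: (leif_normC_Re_Creal q).1.
Qed.

Unset Implicit Arguments.

Theorem corollary4p7 (C : numClosedFieldType) (n : nat) (rho : qop C n)
  (c : C) :
  density_matrix rho ->
  0 < c ->
  rho (zeros n) (zeros n) = 2 / 3 + c ->
  forall a : 'I_n -> bool -> C,
    (forall i, unit_qubit (a i)) ->
    let z := fun i : 'I_n => rho (e_ i) (zeros n) in
    braket (product_state a) rho (product_state a)
      <= rho (zeros n) (zeros n)
         + Num.min (3 * norm2 z) (norm2 z ^+ 2 / c).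
Proof.
move=> [hr hp htr] c0 hp00 a hu; cbv zeta.
set z := fun i : 'I_n => rho (e_ i) (zeros n).
set z0 := zeros n.
set p := rho z0 z0.
set pi := product_state a.
set al := pi z0.
pose w : qvec C n := fun x => if x == z0 then 0 else pi x.
set X := \sum_y rho z0 y * w y.
set f := braket pi rho pi.
have p0 : 0 < p by rewrite /p hp00; apply: addr_gt0 => //; apply: divr_gt0; rewrite ltr0n.
have C1 : f = al^* * al * p + (al^* * X + al * X^*) + braket w rho w.
  have := braket_expand rho w z0 al.
  rewrite /= (herm_sum w z0 hr) -/X -/p => E.
  have ew : forall x, pi x = w x + (x == z0)%:R * al.
    by move=> x; rewrite /w; case: eqP => [->|_]; rewrite ?add0r ?mul1r ?mul0r ?addr0.
  by rewrite /f (braket_ext rho ew ew) E; ring.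
have tot : \sum_x `|pi x| ^+ 2 = 1 by exact: pi_total.
set A := `|al| ^+ 2.
set s := \sum_x `|w x| ^+ 2.
have w0 : w z0 = 0 by rewrite /w eqxx.
have wE : forall x, x != z0 -> w x = pi x by move=> x /negbTE hx; rewrite /w hx.
have es : s = 1 - A.
  have : A + s = 1.
    rewrite -tot [in RHS](bigD1 z0) //= /s (bigD1 z0) //= w0 normr0 expr0n /= add0r.
    by congr (_ + _); apply: eq_bigr => x hx; rewrite wE.
  by move=> <-; rewrite [A + s]addrC addrK.
set K := \sum_(x | x != z0) `|rho x z0| ^+ 2.
set Z2 := \sum_i `|z i| ^+ 2.
set k2 := \sum_(x | (x != z0) && (x \notin E1 n)) `|rho x z0| ^+ 2.
have eK : K = Z2 + k2 by rewrite /K sum_split_nz sum_E1.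
have enz : forall i, e_ i != z0.
  move=> i; apply/negP => /eqP ei; have := zeros_notin_E1 n.
  by rewrite -/z0 -ei; move/negP; apply; apply/imsetP; exists i.
set B := \sum_i `|pi (e_ i)| ^+ 2.
set Rw := \sum_(x | (x != z0) && (x \notin E1 n)) `|w x| ^+ 2.
have esB : s = B + Rw.
  rewrite /s sum_split3 -/z0 w0 normr0 expr0n /= add0r sum_E1; congr (_ + _).
  by apply: eq_bigr => i _; rewrite wE.
have C2 : braket w rho w - X^* * X / p <= s * (1 - p - K / p).
  have := schur_bound w hr hp p0; rewrite -/X -/s htr.
  suff -> : \sum_x `|rho x z0| ^+ 2 = p ^+ 2 + K.
    have pn : p != 0 by rewrite gt_eqF.
    suff -> : 1 - (p ^+ 2 + K) / p = 1 - p - K / p by [].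
    by field.
  by rewrite (bigD1 z0) //= -/p ger0_norm // ltW.
have C3 : al^* * X + al * X^* <= 2 * (`|al| * `|X|).
  have := ReP_le (al^* * X); rewrite rmorphM /= conjCK normrM norm_conjC.
  by rewrite (mulrC al).
have C4 : `|X| <= sqrtC Z2 * sqrtC B + sqrtC k2 * sqrtC Rw.
  rewrite /X sum_split3 -/z0 w0 mulr0 add0r.
  apply: le_trans (ler_normD _ _) _.
  apply: lerD.
    apply: le_trans (CS (fun x => x \in E1 n) _ _) _.
    rewrite !sum_E1.
    have -> : \sum_i `|rho z0 (e_ i)| ^+ 2 = Z2.
      by apply: eq_bigr => i _; rewrite (hr (e_ i) z0) norm_conjC.
    have -> : \sum_i `|w (e_ i)| ^+ 2 = B.
      by apply: eq_bigr => i _; rewrite wE.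
    by [].
  apply: le_trans (CS (fun x => (x != z0) && (x \notin E1 n)) _ _) _.
  rewrite -/Rw.
  have -> : \sum_(x | (x != z0) && (x \notin E1 n)) `|rho z0 x| ^+ 2 = k2.
    by apply: eq_bigr => x _; rewrite (hr x z0) norm_conjC.
  by [].
pose u := fun i : 'I_n => `|a i false| ^+ 2.
have hA : A = \prod_i u i by rewrite /A /al /pi pi_zero.
have hB : B = \sum_i (1 - u i) * \prod_j (if j == i then 1 else u j).
  by apply: eq_bigr => i _; rewrite /pi pi_e.
have ur : forall i, u i \is Num.real by move=> i; apply: ger0_real; apply: exprn_ge0.
pose U := fun i => @in_Rr C (u i) (ur i).
have hU : forall i, 0 <= U i <= 1.
  move=> i; rewrite !Rr_leE /=; apply/andP; split; first exact: exprn_ge0.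
  by rewrite -(hu i) lerDl exprn_ge0.
have [_ _ _ q2 q1] := prod_facts hU.
have eA' : Rrval (\prod_i U i) = A by rewrite hA rmorph_prod.
have eB' : Rrval (\sum_i (1 - U i) * \prod_j (if j == i then 1 else U j)) = B.
  rewrite hB rmorph_sum; apply: eq_bigr => i _.
  rewrite rmorphM rmorphB rmorph1 rmorph_prod; congr (_ * _).
  by apply: eq_bigr => j _; case: (j == i); rewrite ?rmorph1.
have Q2 : A * (1 - A) <= B.
  by move: q2; rewrite Rr_leE /= ?rmorphM ?rmorphB ?rmorph1 eA' eB'.
have Q1 : 2 * A * (1 - A - B) <= (1 - A) * B.
  by move: q1; rewrite Rr_leE /= ?rmorphM ?rmorphB ?rmorph1 ?rmorph_nat eA' eB'.
have sq0 : forall (T : finType) (P : pred T) (F : T -> C), 0 <= \sum_(i | P i) `|F i| ^+ 2.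
  by move=> T P F; apply: sumr_ge0 => i _; apply: exprn_ge0.
have B0 : 0 <= B by apply: sq0.
have Rw0 : 0 <= Rw by apply: sq0.
have s0 : 0 <= s by apply: sq0.
have k20 : 0 <= k2 by apply: sq0.
have Z20 : 0 <= Z2 by apply: sq0.
have fr : f \is Num.real.
  by apply: ger0_real; exact: hp.
have eZ : norm2 z = sqrtC Z2 by [].
have pE : p = 2/3 + c by rewrite /p hp00.
have sB : 0 <= sqrtC B by rewrite sqrtC_ge0.
have sR : 0 <= sqrtC Rw by rewrite sqrtC_ge0.
have ss : 0 <= sqrtC s by rewrite sqrtC_ge0.
have sZ : 0 <= sqrtC Z2 by rewrite sqrtC_ge0.
have sk : 0 <= sqrtC k2 by rewrite sqrtC_ge0.
have := @core_C C c f `|al| (sqrtC B) (sqrtC Rw) (sqrtC s) `|X| (sqrtC Z2) (sqrtC k2)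
  c0 fr (normr_ge0 _) sB sR ss (normr_ge0 _) sZ sk.
rewrite !sqrtCK -/A.
have eRw : Rw = s - B by rewrite esB [B + Rw]addrC addrK.
have H6 : f <= A * (2 / 3 + c) + 2 * `|al| * `|X| + `|X| ^+ 2 / (2 / 3 + c) +
    s * (1 - (2 / 3 + c) - (Z2 + k2) / (2 / 3 + c)).
  rewrite -pE -eK C1.
  have eA : al^* * al = A by rewrite /A normCK mulrC.
  have eX : X^* * X = `|X| ^+ 2 by rewrite normCK mulrC.
  have C2' : braket w rho w <= X^* * X / p + s * (1 - p - K / p) by rewrite -lerBlDl.
  rewrite eA.
  apply: le_trans (lerD (lerD (lexx (A * p)) C3) C2') _.
  rewrite le_eqVlt; apply/orP; left; apply/eqP; rewrite -eX; ring.
have K1 : A + s = 1 by rewrite es addrC subrK.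
have K3 : 2 * A * Rw <= s * B by rewrite eRw es.
have K4 : A * s <= B by rewrite es.
move=> /(_ K1 (esym esB) K3 K4 C4 H6) [G1 G2].
rewrite eZ pE.
have r1 : 3 * sqrtC Z2 \is Num.real by apply: ger0_real; rewrite mulr_ge0 ?ler0n.
have r2 : Z2 / c \is Num.real by apply: ger0_real; rewrite divr_ge0 // ltW.
by case: (real_leP r1 r2).
Qed.
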